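(* Let $(X,d)$ be a metric space admitting a weak conical bicombing, and let $T:X\rightarrow X$ be an isometric embedding (i.e. $d(Tx,Ty)=d(x,y)$ for all $x,y\in X$). Put $d_T=\inf_{x\in X}d(x,Tx)$. Then there is a metric functional $h\in\overline{X}$ such that \[ h(Tx)=h(x)-d_T\quad\text{for all }x\in X. \] If $h=h_{y}$ for some point $y\in X$, then $Ty=y$. If $T$ is an isometry (a surjective isometric embedding), then $Th=h$.
   Context: Let $(X,d)$ be a metric space and fix a base point $x_0\in X$. Let $\mathrm{Hom}(X,\mathbb{R})$ be the set of $1$-Lipschitz functions $X\to\mathbb{R}$ with the topology of pointwise convergence. For $x\in X$ set $h_x(\cdot)=d(\cdot,x)-d(x_0,x)$. The metric compactification $\overline{X}$ is the closure of $\{h_x:x\in X\}$ in $\mathrm{Hom}(X,\mathbb{R})$ (it is compact); its elements are called metric functionals. A surjective isometry $T$ of $X$ acts on $\overline{X}$ by $(Th)(x)=h(T^{-1}x)-h(T^{-1}x_0)$. A weak conical bicombing on $X$ is a map $\sigma:X\times X\times[0,1]\to X$, $(x,y,t)\mapsto\sigma_{xy}(t)$, such that for all $x,y$ the path $\sigma_{xy}$ is a constant speed geodesic from $x$ to $y$ (i.e. $\sigma_{xy}(0)=x$, $\sigma_{xy}(1)=y$, $d(\sigma_{xy}(s),\sigma_{xy}(t))=|s-t|\,d(x,y)$), and $d(\sigma_{xy}(t),\sigma_{xy'}(t))\le t\,d(y,y')$ for all $x,y,y'\in X$ and $t\in[0,1]$. *)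

(* Defs.v *)
From Stdlib Require Import Reals List.
Open Scope R_scope.

Definition is_metric {X : Type} (d : X -> X -> R) : Prop :=
  (forall x y, d x y = 0 <-> x = y) /\
  (forall x y, d x y = d y x) /\
  (forall x y z, d x z <= d x y + d y z).

Definition weak_conical_bicombing {X : Type} (d : X -> X -> R)
  (sigma : X -> X -> R -> X) : Prop :=
  (forall x y, sigma x y 0 = x /\ sigma x y 1 = y) /\
  (forall x y s t, 0 <= s <= 1 -> 0 <= t <= 1 ->
     d (sigma x y s) (sigma x y t) = Rabs (s - t) * d x y) /\
  (forall x y y' t, 0 <= t <= 1 ->
     d (sigma x y t) (sigma x y' t) <= t * d y y').

Definition lipschitz1 {X : Type} (d : X -> X -> R) (h : X -> R) : Prop :=
  forall x y, Rabs (h x - h y) <= d x y.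

Definition hfun {X : Type} (d : X -> X -> R) (x0 x : X) : X -> R :=
  fun z => d z x - d x0 x.

(* h belongs to the closure of {h_x : x in X} in Hom(X,R) with the topology of
   pointwise convergence (basic neighbourhoods: finitely many points, radius eps). *)
Definition metric_functional {X : Type} (d : X -> X -> R) (x0 : X) (h : X -> R)
  : Prop :=
  lipschitz1 d h /\
  forall (F : list X) (eps : R), 0 < eps ->
    exists x : X, forall z, In z F -> Rabs (h z - hfun d x0 x z) < eps.

Definition is_inf_displacement {X : Type} (d : X -> X -> R) (T : X -> X) (dT : R)
  : Prop :=
  (forall x, dT <= d x (T x)) /\
  (forall e, 0 < e -> exists x, d x (T x) < dT + e).

(* Main.v *)
Require Import Defs.
From Stdlib Require Import Reals List Lra.
Lemma Rabs_le_betw (x b : R) : (Rabs x <= b)%R -> (- b <= x /\ x <= b)%R.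
Proof. intros H. pose proof (Rle_abs x). pose proof (Rle_abs (-x)). rewrite Rabs_Ropp in *. lra. Qed.
From HB Require Import structures.
From mathcomp Require all_boot all_order all_algebra all_classical all_reals topology normedtype Rstruct Rstruct_topology.
Module Cpt.
Import all_boot all_order all_algebra all_classical all_reals topology normedtype Rstruct Rstruct_topology.
Import Order.TTheory GRing.Theory Num.Theory.
Import numFieldNormedType.Exports.
Local Open Scope classical_set_scope.
Local Open Scope ring_scope.

Lemma cluster_lemma (X : Type) (b : X -> R) (P : nat -> (X -> R) -> Prop) :
  (forall n, exists f, P n f /\ forall z, Rle (Rabs (f z)) (b z)) ->
  exists h : X -> R, forall (F : list X) (eps : R) (N : nat), Rlt 0 eps ->
     exists n f, (N <= n)%coq_nat /\ P n f /\
       forall z, In z F -> Rlt (Rabs (Rminus (h z) (f z))) eps.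
Proof.
move=> Hex.
pose T := prod_topology (fun _ : {classic X} => R).
pose B (N : nat) : set T := [set f | exists n, (N <= n)%coq_nat /\ P n f /\
   forall z, Rle (Rabs (f z)) (b z)].
pose A : set T := [set f | forall i : {classic X}, `[- b i, b i]%classic (f i)].
have cA : compact A.
  exact: (@tychonoff {classic X} (fun _ => R) (fun i => `[- b i, b i]%classic) (fun i => @segment_compact R (- b i) (b i))).
pose G := filter_from setT B.
have GF : ProperFilter G.
  apply: filter_from_proper.
    apply: filter_fromT_filter; first by exists 0%N.
    move=> i j; exists (maxn i j) => f [n [Hn [Pn Hb]]]; split.
      exists n; split=> //; apply/ssrnat.leP; move/ssrnat.leP: Hn; rewrite geq_max; case/andP=> //.
    exists n; split=> //; apply/ssrnat.leP; move/ssrnat.leP: Hn; rewrite geq_max; case/andP=> //.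
  move=> N _; have [f [Pf bf]] := Hex N; exists f; exists N; split=> //.
have GA : G A.
  exists 0%N => // f [n [_ [_ Hb]]] i /=.
  rewrite in_itv /=; have := Hb i => /Rabs_le_betw [h1 h2].
  by apply/andP; split; apply/RleP.
have [h [_ hcl]] := cA G GF GA.
exists h => F eps N epos.
pose V : set T := [set f | forall z, In z F -> Rlt (Rabs (Rminus (h z) (f z))) eps].
have nV : nbhs h V.
  elim: F @V => [|z F IH].
    by apply: filterS filterT => f _ z [].
  have Hz : nbhs h (proj (z : {classic X}) @^-1` ball (h z) eps).
    by apply: proj_continuous; apply: nbhsx_ballx; apply/RltP.
  apply: filterS (filterI Hz IH) => f [Hf1 Hf2] w [<-|Hw]; last by apply: Hf2.
  by move: Hf1; rewrite /ball /= => /RltP.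
have [f [[n [Hn [Pn _]]] Vf]] := hcl (B N) V (ex_intro2 _ _ N I (fun _ x => x)) nV.
by exists n, f.
Qed.
End Cpt.

From Stdlib Require Import Reals List Lra.
Open Scope R_scope.

Lemma le_eps_0 (a C : R) : 0 <= C -> (forall eps, 0 < eps -> Rabs a <= C * eps) -> a = 0.
Proof.
  intros HC H. destruct (Req_dec a 0) as [|Ha]; auto.
  assert (Hp : 0 < Rabs a) by (apply Rabs_pos_lt; auto).
  specialize (H (Rabs a / (2 * (C + 1)))).
  assert (0 < Rabs a / (2 * (C + 1))) by (apply Rdiv_lt_0_compat; lra).
  specialize (H H0).
  assert (C * (Rabs a / (2 * (C + 1))) < Rabs a).
  { unfold Rdiv. rewrite <- Rmult_assoc. apply (Rmult_lt_reg_r (2 * (C+1))). lra.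
    rewrite Rmult_assoc, Rinv_l by lra. nra. }
  lra.
Qed.

Lemma le_eps (a b : R) : (forall eps, 0 < eps -> a <= b + eps) -> a <= b.
Proof.
  intros H. destruct (Rle_dec a b) as [|Hn]; auto.
  specialize (H ((a - b)/2)). lra.
Qed.

Theorem theorem1 (X : Type) (d : X -> X -> R) (x0 : X)
  (Hd : is_metric d)
  (Hbic : exists sigma : X -> X -> R -> X, weak_conical_bicombing d sigma)
  (T : X -> X) (HT : forall x y, d (T x) (T y) = d x y)
  (dT : R) (HdT : is_inf_displacement d T dT) :
  exists h : X -> R,
    metric_functional d x0 h /\
    (forall x, h (T x) = h x - dT) /\
    (forall y, (forall z, h z = hfun d x0 y z) -> T y = y) /\
    ((forall y, exists x, T x = y) ->
      forall Tinv : X -> X, (forall x, T (Tinv x) = x) ->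
        forall x, h (Tinv x) - h (Tinv x0) = h x).
Proof.
  destruct Hd as [Hd0 [Hsym Htri]].
  assert (Hdxx : forall x, d x x = 0) by (intros; apply Hd0; auto).
  assert (dnn : forall x y, 0 <= d x y).
  { intros x y. pose proof (Htri x y x). rewrite Hdxx, (Hsym y x) in H. lra. }
  destruct HdT as [HdT1 HdT2].
  assert (dTnn : 0 <= dT).
  { destruct (Rle_dec 0 dT) as [|Hn]; auto.
    destruct (HdT2 (- dT)) as [x Hx]; [lra|]. pose proof (dnn x (T x)). lra. }
  destruct Hbic as [sg [Hends [Hgeo Hcon]]].
  set (S := fun t y => sg x0 (T y) t).
  assert (s1 : forall t a b, 0 <= t <= 1 -> d (S t a) (S t b) <= t * d a b).
  { intros t a b Ht. unfold S. rewrite <- (HT a b). apply Hcon; auto. }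
  assert (s2 : forall t a, 0 <= t <= 1 -> d (S t a) (T a) = (1 - t) * d x0 (T a)).
  { intros t a Ht. unfold S. pose proof (Hgeo x0 (T a) t 1 Ht ltac:(lra)) as H.
    rewrite (proj2 (Hends x0 (T a))) in H. rewrite H. f_equal.
    rewrite Rabs_left1 by lra. ring. }
  assert (s3 : forall t a, 0 <= t <= 1 -> d x0 (S t a) = t * d x0 (T a)).
  { intros t a Ht. unfold S. pose proof (Hgeo x0 (T a) 0 t ltac:(lra) Ht) as H.
    rewrite (proj1 (Hends x0 (T a))) in H. rewrite H. f_equal.
    rewrite Rabs_left1 by lra. ring. }
  assert (afp : forall t del, 0 <= t < 1 -> 0 < del -> exists y, d y (S t y) <= del).
  { intros t del Ht Hdel.
    set (C := d x0 (S t x0)).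
    assert (Hk : forall k, d (Nat.iter k (S t) x0) (Nat.iter (Datatypes.S k) (S t) x0) <= t ^ k * C).
    { induction k as [|k IH].
      - change (d x0 (S t x0) <= 1 * C). unfold C. lra.
      - change (d (S t (Nat.iter k (S t) x0)) (S t (Nat.iter (Datatypes.S k) (S t) x0)) <= t * t ^ k * C).
        eapply Rle_trans. apply s1. lra.
        rewrite Rmult_assoc. apply Rmult_le_compat_l; lra. }
    assert (HC : 0 <= C) by apply dnn.
    destruct (pow_lt_1_zero t ltac:(rewrite Rabs_right; lra) (del / (C + 1))) as [N HN].
    { apply Rdiv_lt_0_compat; lra. }
    specialize (HN N (le_n N)). rewrite Rabs_right in HN by (apply Rle_ge, pow_le; lra).
    exists (Nat.iter N (S t) x0). eapply Rle_trans. apply Hk.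
    assert (0 <= t ^ N) by (apply pow_le; lra).
    assert (t ^ N * (C + 1) < del).
    { apply (Rmult_lt_compat_r (C+1)) in HN; [|lra].
      unfold Rdiv in HN. rewrite Rmult_assoc, Rinv_l in HN by lra. lra. }
    assert (t ^ N * C <= t ^ N * (C + 1)) by (apply Rmult_le_compat_l; lra). lra. }
  set (Good := fun eps y =>
     (forall x, - dT - 4 * eps <= d (T x) y - d x y) /\
     (forall x, d (T x) y - d x y <= - dT + eps * (dT + d x0 (T x) + d x0 x) + 2 * eps)).
  assert (core : forall t eps xs y, 0 <= t <= 1 -> 0 < eps -> 1 - t <= eps ->
            2 * (1 - t) * d x0 (T xs) <= eps -> d xs (T xs) <= dT + eps ->
            d y (S t y) <= eps -> Good eps y).
  { intros t eps xs y Ht He H1t H2t Hxs Hy.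
    set (m := d x0 (T y)).
    set (s := S t y).
    assert (Hsm : d s (T y) = (1 - t) * m) by (apply s2; auto).
    assert (Hx0s : d x0 s = t * m) by (apply s3; auto).
    assert (Hyxs : (1 - t) * d y xs <= eps + (1 - t) * d x0 (T xs) + d xs (T xs)).
    { pose proof (Htri y s xs). pose proof (Htri s (S t xs) xs).
      pose proof (s1 t y xs Ht). pose proof (Htri (S t xs) (T xs) xs).
      pose proof (s2 t xs Ht). rewrite (Hsym (T xs) xs) in *. unfold s in *. nra. }
    assert (Hm : (1 - t) * m <= (1 - t) * d x0 (T xs) + (1 - t) * d y xs).
    { rewrite <- Rmult_plus_distr_l. apply Rmult_le_compat_l; [lra|].
      unfold m. pose proof (Htri x0 (T xs) (T y)). rewrite HT, (Hsym xs y) in H. lra. }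
    assert (Hyty : d y (T y) <= eps + (1 - t) * m).
    { pose proof (Htri y s (T y)). unfold s in *. lra. }
    assert (Hlow : dT - eps <= (1 - t) * m) by (pose proof (HdT1 y); lra).
    assert (Hx0y : t * dT - eps <= (1 - t) * d x0 y).
    { pose proof (Htri x0 y s). fold s in Hy.
      assert ((1 - t) * (t * m - eps) <= (1 - t) * d x0 y).
      { apply Rmult_le_compat_l; lra. }
      assert (t * (dT - eps) <= t * ((1 - t) * m)) by (apply Rmult_le_compat_l; lra).
      nra. }
    split.
    - intros x. pose proof (Htri (T x) y (T y)). rewrite HT in H. nra.
    - intros x.
      pose proof (Htri (T x) (S t x) y). pose proof (Htri (S t x) s y).
      pose proof (s1 t x y Ht). pose proof (s2 t x Ht).
      rewrite (Hsym (T x) (S t x)) in H. rewrite (Hsym s y) in H0. fold s in H1.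
      assert (Hxy : (1 - t) * (d x0 y - d x0 x) <= (1 - t) * d x y).
      { apply Rmult_le_compat_l; [lra|]. pose proof (Htri x0 x y). lra. }
      assert ((1 - t) * (dT + d x0 (T x) + d x0 x) <= eps * (dT + d x0 (T x) + d x0 x)).
      { apply Rmult_le_compat_r; [pose proof (dnn x0 (T x)); pose proof (dnn x0 x); lra | lra]. }
      change (d y s <= eps) in Hy. nra. }
  assert (ex : forall n : nat, exists y, Good (/ (INR n + 1)) y).
  { intros n. set (eps := / (INR n + 1)).
    pose proof (pos_INR n) as Hn.
    assert (He : 0 < eps) by (unfold eps; apply Rinv_0_lt_compat; lra).
    destruct (HdT2 eps He) as [xs Hxs].
    set (M := d x0 (T xs)).
    assert (HM : 0 <= M) by apply dnn.
    set (q := eps / (2 * M + 1)).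
    assert (Hq : 0 < q <= eps).
    { unfold q. split. apply Rdiv_lt_0_compat; lra.
      unfold Rdiv. rewrite <- (Rmult_1_r eps) at 2. apply Rmult_le_compat_l. lra.
      rewrite <- Rinv_1. apply Rinv_le_contravar; lra. }
    assert (He1 : eps <= 1).
    { unfold eps. rewrite <- Rinv_1. apply Rinv_le_contravar; lra. }
    assert (H2 : 2 * q * M <= eps).
    { unfold q. replace (2 * (eps / (2 * M + 1)) * M) with (eps * (2*M / (2*M+1))) by (field; lra).
      rewrite <- (Rmult_1_r eps) at 2. apply Rmult_le_compat_l. lra.
      apply (Rmult_le_reg_r (2*M+1)). lra. unfold Rdiv. rewrite Rmult_assoc, Rinv_l by lra. lra. }
    destruct (afp (1 - q) eps ltac:(lra) He) as [y Hy].
    exists y. apply (core (1 - q) eps xs y); try lra.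
    replace (1 - (1 - q)) with q by ring. exact H2. }
  destruct (Cpt.cluster_lemma X (fun z => d z x0)
      (fun n f => exists y, f = hfun d x0 y /\ Good (/ (INR n + 1)) y)) as [h Hh].
  { intros n. destruct (ex n) as [y Hy]. exists (hfun d x0 y). split. eauto.
    intros z. unfold hfun. apply Rabs_le.
    pose proof (Htri z x0 y). pose proof (Htri x0 z y). rewrite (Hsym x0 z) in H0. lra. }
  assert (Hh0 : h x0 = 0).
  { apply (le_eps_0 _ 1); [lra|]. intros eps He.
    destruct (Hh (x0 :: nil) eps 0%nat He) as [n [f [_ [[y [-> _]] Hf]]]].
    specialize (Hf x0 (or_introl eq_refl)). unfold hfun in Hf.
    replace (h x0 - (d x0 y - d x0 y)) with (h x0) in Hf by ring. lra. }
  assert (HTx : forall x, h (T x) = h x - dT).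
  { intros x. set (K := dT + d x0 (T x) + d x0 x).
    assert (HK : 0 <= K) by (unfold K; pose proof (dnn x0 (T x)); pose proof (dnn x0 x); lra).
    assert (h (T x) - (h x - dT) = 0); [|lra].
    apply (le_eps_0 _ (K + 6)); [lra|]. intros eps He.
    destruct (archimed_cor1 eps He) as [N [HN HN0]].
    destruct (Hh (T x :: x :: nil) eps N He) as [n [f [Hn [[y [-> [GA GB]]] Hf]]]].
    pose proof (Hf (T x) (or_introl eq_refl)) as F1.
    pose proof (Hf x (or_intror (or_introl eq_refl))) as F2.
    unfold hfun in F1, F2. apply Rabs_def2 in F1. apply Rabs_def2 in F2.
    specialize (GA x). specialize (GB x). fold K in GB.
    set (en := / (INR n + 1)) in *.
    assert (Hen : en <= eps).
    { apply Rle_trans with (/ INR N); [|lra]. unfold en. apply Rinv_le_contravar.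
      apply lt_0_INR. exact HN0. apply le_INR in Hn. lra. }
    assert (en * K <= eps * K) by (apply Rmult_le_compat_r; lra).
    apply Rabs_le. nra. }
  exists h. split; [split|split; [exact HTx|split]].
  - intros x y. apply Rabs_le.
    assert (Hb : forall eps, 0 < eps -> - d x y - eps <= h x - h y <= d x y + eps).
    { intros eps He.
      destruct (Hh (x :: y :: nil) (eps/2) 0%nat ltac:(lra)) as [n [f [_ [[y' [-> _]] Hf]]]].
      pose proof (Hf x (or_introl eq_refl)) as F1.
      pose proof (Hf y (or_intror (or_introl eq_refl))) as F2.
      unfold hfun in F1, F2. apply Rabs_def2 in F1. apply Rabs_def2 in F2.
      pose proof (Htri x y y'). pose proof (Htri y x y'). rewrite (Hsym y x) in H0. lra. }
    split.
    + assert (- (h x - h y) <= d x y); [|lra]. apply le_eps. intros eps He.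
      specialize (Hb eps He). lra.
    + apply le_eps. intros eps He. specialize (Hb eps He). lra.
  - intros F eps He. destruct (Hh F eps 0%nat He) as [n [f [_ [[y [-> _]] Hf]]]].
    exists y. exact Hf.
  - intros y Hy. pose proof (HTx y) as E. rewrite !Hy in E. unfold hfun in E.
    rewrite Hdxx in E. pose proof (dnn (T y) y). apply Hd0. lra.
  - intros _ Tinv HTinv x. pose proof (HTx (Tinv x)) as E1. pose proof (HTx (Tinv x0)) as E2.
    rewrite HTinv in E1, E2. lra.
Qed.
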